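(* Let $(\mathfrak g,[\cdot,\cdot]_{\mathfrak g},E)$ be an ENL algebra and $K:W\to\mathfrak g$ an ENE-relative Rota–Baxter operator with respect to an ENE-representation $(W;T,\rho)$, and let $(W,[\cdot,\cdot]_K,T)$ be the ENL algebra with $[u,v]_K=\rho(Ku)v-\rho(Kv)u$. Define $\mu:W\to\mathfrak{gl}(\mathfrak g)$ by $\mu(u)x=K(\rho(x)u)-[x,Ku]_{\mathfrak g}$. Then $((\mathfrak g,E),(W,T);\rho,\mu)$ is a matched pair of ENL algebras.
   Context: Vector spaces are finite-dimensional over an algebraically closed field of characteristic zero. An ENL algebra is a Lie algebra with linear $E$ satisfying $E[x,y]=[x,Ey]$ for all $x,y$. An ENE-representation $(W;T,\rho)$ of $(\mathfrak g,E)$ is a representation $\rho:\mathfrak g\to\mathfrak{gl}(W)$ with linear $T$ such that $T(\rho(x)u)=\rho(Ex)u=\rho(x)(Tu)$. An ENE-relative Rota–Baxter operator is a linear $K:W\to\mathfrak g$ with $[Ku,Kv]_{\mathfrak g}=K(\rho(Ku)v-\rho(Kv)u)$ and $E\circ K=K\circ T$. A matched pair of Lie algebras $(\mathfrak g,\mathfrak h;\rho,\mu)$: Lie algebras $\mathfrak g,\mathfrak h$ with representations $\rho:\mathfrak g\to\mathfrak{gl}(\mathfrak h)$, $\mu:\mathfrak h\to\mathfrak{gl}(\mathfrak g)$ such that $\rho(x)[\xi,\eta]_{\mathfrak h}=[\rho(x)\xi,\eta]_{\mathfrak h}+[\xi,\rho(x)\eta]_{\mathfrak h}+\rho(\mu(\eta)x)\xi-\rho(\mu(\xi)x)\eta$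 and $\mu(\xi)[x,y]_{\mathfrak g}=[\mu(\xi)x,y]_{\mathfrak g}+[x,\mu(\xi)y]_{\mathfrak g}+\mu(\rho(y)\xi)x-\mu(\rho(x)\xi)y$. For ENL algebras $(\mathfrak g,E),(\mathfrak h,F)$, a matched pair of ENL algebras is such a matched pair with $F(\rho(x)\xi)=\rho(Ex)\xi=\rho(x)(F\xi)$ and $E(\mu(\xi)x)=\mu(F\xi)x=\mu(\xi)(Ex)$ for all $x\in\mathfrak g,\xi\in\mathfrak h$. *)

(* Defs.v *)
From HB Require Import structures.
From mathcomp Require Import all_boot all_algebra.
Set Implicit Arguments. Unset Strict Implicit. Unset Printing Implicit Defensive.
Import GRing.Theory.
Local Open Scope ring_scope.

Section ENL.
Variable F : fieldType.

Definition is_linear (U V : lmodType F) (f : U -> V) : Prop :=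
  forall (a : F) (x y : U), f (a *: x + y) = a *: f x + f y.

Definition is_lie (g : lmodType F) (br : g -> g -> g) : Prop :=
  [/\ forall x, is_linear (br x),
      forall y, is_linear (fun x => br x y),
      forall x, br x x = 0 &
      forall x y z, br x (br y z) + br y (br z x) + br z (br x y) = 0].

Definition is_rep (g W : lmodType F) (br : g -> g -> g) (rho : g -> W -> W) : Prop :=
  [/\ forall x, is_linear (rho x),
      forall u, is_linear (fun x => rho x u) &
      forall x y u, rho (br x y) u = rho x (rho y u) - rho y (rho x u)].

Definition is_ENL (g : lmodType F) (br : g -> g -> g) (E : g -> g) : Prop :=
  [/\ is_lie br, is_linear E & forall x y, E (br x y) = br x (E y)].

Definition is_ENE_rep (g W : lmodType F) (br : g -> g -> g) (E : g -> g)
  (T : W -> W) (rho : g -> W -> W) : Prop :=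
  [/\ is_rep br rho, is_linear T &
      forall x u, T (rho x u) = rho (E x) u /\ rho (E x) u = rho x (T u)].

Definition is_ENE_RB (g W : lmodType F) (br : g -> g -> g) (E : g -> g)
  (T : W -> W) (rho : g -> W -> W) (K : W -> g) : Prop :=
  [/\ is_linear K,
      forall u v, br (K u) (K v) = K (rho (K u) v - rho (K v) u) &
      forall u, E (K u) = K (T u)].

Definition is_matched_pair (g h : lmodType F) (brg : g -> g -> g) (brh : h -> h -> h)
  (rho : g -> h -> h) (mu : h -> g -> g) : Prop :=
  [/\ is_lie brg, is_lie brh, is_rep brg rho /\ is_rep brh mu,
      forall x xi eta, rho x (brh xi eta) =
        brh (rho x xi) eta + brh xi (rho x eta) + rho (mu eta x) xi - rho (mu xi x) eta &
      forall xi x y, mu xi (brg x y) =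
        brg (mu xi x) y + brg x (mu xi y) + mu (rho y xi) x - mu (rho x xi) y].

Definition is_matched_pair_ENL (g h : lmodType F) (brg : g -> g -> g) (E : g -> g)
  (brh : h -> h -> h) (Fh : h -> h) (rho : g -> h -> h) (mu : h -> g -> g) : Prop :=
  [/\ is_ENL brg E, is_ENL brh Fh, is_matched_pair brg brh rho mu,
      forall x xi, Fh (rho x xi) = rho (E x) xi /\ rho (E x) xi = rho x (Fh xi) &
      forall x xi, E (mu xi x) = mu (Fh xi) x /\ mu (Fh xi) x = mu xi (E x)].

End ENL.

Definition bracketK (F : fieldType) (g W : lmodType F) (rho : g -> W -> W) (K : W -> g)
  (u v : W) : W := rho (K u) v - rho (K v) u.

Definition muK (F : fieldType) (g W : lmodType F) (br : g -> g -> g)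
  (rho : g -> W -> W) (K : W -> g) (u : W) (x : g) : g := K (rho x u) - br x (K u).

(* Main.v *)
Require Import Defs.
From mathcomp Require Import all_boot all_algebra.
Import GRing.Theory.
Local Open Scope ring_scope.

Section ZR.
Variable V : zmodType.
Inductive zex := ZAt of nat | ZPl of zex & zex | ZOp of zex | ZZe.
Fixpoint zev (env : seq V) e := match e with
 | ZAt i => nth 0 env i | ZPl a b => zev env a + zev env b
 | ZOp a => - zev env a | ZZe => 0 end.
Fixpoint zaddl (s t : seq int) := match s, t with
 | [::], _ => t | _, [::] => s | a :: s', b :: t' => (a + b) :: zaddl s' t' end.
Fixpoint znf e : seq int := match e with
 | ZAt i => nseq i 0 ++ [:: 1] | ZPl a b => zaddl (znf a) (znf b)
 | ZOp a => map (fun c => - c) (znf a) | ZZe => [::] end.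
Fixpoint zevs (s : seq int) (env : seq V) := match s with
 | [::] => 0 | c :: s' => head 0 env *~ c + zevs s' (behead env) end.
Lemma zevs_add s t env : zevs (zaddl s t) env = zevs s env + zevs t env.
Proof.
elim: s t env => [|a s IH] [|b t] env /=; rewrite ?add0r ?addr0 //.
by rewrite IH mulrzDr addrACA.
Qed.
Lemma zevs_opp s env : zevs (map (fun c => - c) s) env = - zevs s env.
Proof. elim: s env => [|a s IH] env /=; rewrite ?oppr0 // IH mulrNz opprD //. Qed.
Lemma zevs_at i env : zevs (nseq i 0 ++ [:: 1]) env = nth 0 env i.
Proof.
elim: i env => [|i IH] [|x env] /=; rewrite ?mulr0z ?mulr1z ?mul0rz ?addr0 ?add0r ?nth_nil ?IH ?nth_nil //.


Qed.
Lemma zevs0 s env : all (fun c => c == 0) s -> zevs s env = 0.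
Proof. elim: s env => [|a s IH] env //= /andP[/eqP -> h]. by rewrite mulr0z add0r IH. Qed.
Lemma zev_nf env e : zev env e = zevs (znf e) env.
Proof.
elim: e => [i|a IHa b IHb|a IHa|] /=.
- by rewrite zevs_at.
- by rewrite zevs_add IHa IHb.
- by rewrite zevs_opp IHa.
- by [].
Qed.
Lemma zsolve env e1 e2 :
  all (fun c => c == 0) (zaddl (znf e1) (map (fun c => - c) (znf e2))) ->
  zev env e1 = zev env e2.
Proof.
move=> h; apply/eqP; rewrite -subr_eq0; apply/eqP.
by rewrite !zev_nf -zevs_opp -zevs_add (zevs0 _ env h).
Qed.
End ZR.

Ltac zinList x l := match l with
  | nil => false
  | cons ?y _ => let h := constr:(@erefl _ x : x = y) in true
  | cons _ ?l' => zinList x l' end.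
Ltac zatoms t l := lazymatch t with
  | GRing.add ?a ?b => let l1 := zatoms a l in zatoms b l1
  | GRing.opp ?a => zatoms a l
  | GRing.zero => l
  | _ => let b := zinList t l in lazymatch b with true => l | false => constr:(cons t l) end
  end.
Ltac zidx x l := match l with
  | cons ?y _ => let h := constr:(@erefl _ x : x = y) in constr:(0%N)
  | cons _ ?l' => let n := zidx x l' in constr:(S n) end.
Ltac zreify l t := lazymatch t with
  | GRing.add ?a ?b => let ra := zreify l a in let rb := zreify l b in constr:(ZPl ra rb)
  | GRing.opp ?a => let ra := zreify l a in constr:(ZOp ra)
  | GRing.zero => constr:(ZZe)
  | _ => let n := zidx t l in constr:(ZAt n)
  end.
Ltac zmod := lazymatch goal with |- @eq ?V ?L ?R =>
  let l := zatoms L (@nil V) in let l := zatoms R l in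
  let eL := zreify l L in let eR := zreify l R in
  change (@zev V l eL = @zev V l eR); apply: (@zsolve V); vm_compute; reflexivity end.

Set Implicit Arguments.
Section Lin.
Variables (F : fieldType) (U V : lmodType F) (f : U -> V).
Hypothesis hf : is_linear f.
Lemma lin0 : f 0 = 0.
Proof.
have h := hf 1 0 0; rewrite !scale1r addr0 in h.
by apply: (@addrI _ (f 0)); rewrite addr0 -h.
Qed.
Lemma linD x y : f (x + y) = f x + f y.
Proof. by have := hf 1 x y; rewrite !scale1r. Qed.
Lemma linZ a x : f (a *: x) = a *: f x.
Proof. by have := hf a x 0; rewrite !addr0 lin0 addr0. Qed.
Lemma linN x : f (- x) = - f x.
Proof. by rewrite -scaleN1r linZ scaleN1r. Qed.
Lemma linB x y : f (x - y) = f x - f y.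
Proof. by rewrite linD linN. Qed.
End Lin.

Theorem proposition6p5 (F : closedFieldType) (hF : [pchar F]%R =i pred0)
  (g W : vectType F) (br : g -> g -> g) (E : g -> g)
  (T : W -> W) (rho : g -> W -> W) (K : W -> g) :
  is_ENL br E ->
  is_ENE_rep br E T rho ->
  is_ENE_RB br E T rho K ->
  is_matched_pair_ENL br E (bracketK rho K) T rho (muK br rho K).
Proof.
move=> [hlie hE hEbr] [[rl1 rl2 rrep] hT hTr] [hK hKbr hKE].
have hlie' := hlie; case: hlie' => bl1 bl2 balt bjac.
have brDr : forall x a b, br x (a + b) = br x a + br x b := fun x => linD (bl1 x).
have brBr : forall x a b, br x (a - b) = br x a - br x b := fun x => linB (bl1 x).
have brNr : forall x a, br x (- a) = - br x a := fun x => linN (bl1 x).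
have brZr : forall x c a, br x (c *: a) = c *: br x a := fun x => linZ (bl1 x).
have brDl : forall a b y, br (a + b) y = br a y + br b y := fun a b y => linD (bl2 y) a b.
have brBl : forall a b y, br (a - b) y = br a y - br b y := fun a b y => linB (bl2 y) a b.
have brNl : forall a y, br (- a) y = - br a y := fun a y => linN (bl2 y) a.
have brZl : forall c a y, br (c *: a) y = c *: br a y := fun c a y => linZ (bl2 y) c a.
have brC : forall x y, br x y = - br y x.
  move=> x y; have := balt (x + y).
  rewrite brDl !brDr !balt add0r addr0 => /eqP; rewrite addr_eq0 => /eqP.
  by [].
have r1D : forall x a b, rho x (a + b) = rho x a + rho x b := fun x => linD (rl1 x).
have r1B : forall x a b, rho x (a - b) = rho x a - rho x b := fun x => linB (rl1 x).
have r1N : forall x a, rho x (- a) = - rho x a := fun x => linN (rl1 x).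
have r1Z : forall x c a, rho x (c *: a) = c *: rho x a := fun x => linZ (rl1 x).
have r2D : forall a b u, rho (a + b) u = rho a u + rho b u := fun a b u => linD (rl2 u) a b.
have r2B : forall a b u, rho (a - b) u = rho a u - rho b u := fun a b u => linB (rl2 u) a b.
have r2N : forall a u, rho (- a) u = - rho a u := fun a u => linN (rl2 u) a.
have r2Z : forall c a u, rho (c *: a) u = c *: rho a u := fun c a u => linZ (rl2 u) c a.
have KD := linD hK. have KB := linB hK. have KN := linN hK. have KZ := linZ hK.
have EB := linB hE. have EN := linN hE. have TB := linB hT.
have hT1 : forall x u, T (rho x u) = rho x (T u).
  by move=> x u; case: (hTr x u) => -> ->.
have hT2 : forall x u, T (rho x u) = rho (E x) u.
  by move=> x u; case: (hTr x u).
have hT3 : forall x u, rho (E x) u = rho x (T u).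
  by move=> x u; case: (hTr x u).
have lieK : is_lie (bracketK rho K).
  split.
  - move=> u a v v'; rewrite /bracketK !KD !KZ !r2D !r2Z !r1D !r1Z scalerBr; zmod.
  - move=> v a u u'; rewrite /bracketK !KD !KZ !r2D !r2Z !r1D !r1Z scalerBr; zmod.
  - by move=> u; rewrite /bracketK subrr.
  - move=> u v w; rewrite /bracketK -!hKbr !rrep !r1B; zmod.
have repK : is_rep (bracketK rho K) (muK br rho K).
  split.
  - move=> u a x y; rewrite /muK !r2D !r2Z !KD !KZ !brDl !brZl scalerBr; zmod.
  - move=> x a u v; rewrite /muK !r1D !r1Z !KD !KZ !brDr !brZr scalerBr; zmod.
  - move=> u v x; rewrite /muK /bracketK -hKbr !brBl (hKbr (rho x v) u) (hKbr (rho x u) v).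
    rewrite ?r2B ?rrep ?r1B ?KB ?KD ?KN ?r2N ?r1N ?KB.
    rewrite (brC (br x (K v)) (K u)) (brC (br x (K u)) (K v)) (brC x (K v)) brNr.
    have J := bjac x (K u) (K v).
    rewrite -[RHS]subr0 -J; zmod.
split => //.
- split => //; move=> u v; rewrite /bracketK TB hT1 hT2 hKE //.
- split => //.
  + move=> x xi eta; rewrite /muK /bracketK !r1B !r2B !rrep; zmod.
  + move=> xi x y; rewrite /muK !rrep !KB !brBl !brBr.
    rewrite (brC (K (rho x xi)) y) (brC (br x y) (K xi)) (brC (br x (K xi)) y) (brC x (K xi)) brNr.
    have J := bjac (K xi) x y.
    rewrite -[RHS]addr0 -J; zmod.
- move=> x xi; split.
  + by rewrite /muK EB hEbr !hKE hT1.
  + rewrite /muK hT3 (brC (E x) (K xi)) -hEbr (brC (K xi) x) EN hEbr hKE opprK //.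
Qed.
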